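(* Let $f:\mathbb{N}_+\to\mathbb{N}_+$. Then $L_{I(A_f)}(A_f)(x)=L_{\mathbb{N}_+}\big(n\mapsto\sum_{k=1}^n f(k)\big)^{-1}(x)$ for all $x\in\mathbb{R}_{\ge0}$.
   Context: The sequence ''$n$ occurs $f(n)$ times'', $A_f$, is defined by $A_f\big(m+\sum_{k=1}^n f(k)\big)=n$ for all integers $n\ge1$ and $0\le m<f(n+1)$, with the convention $A_f(m)=0$ for $0\le m<f(1)$. Its set of increase-indices is $I(A_f)=\{n\in\mathbb{N}_+: A_f(n-1)<A_f(n)\}$ (which equals $\{\sum_{k=1}^n f(k): n\ge1\}$). For a function $h$ defined on an infinite set $S\subseteq\mathbb{N}_+$ with values in $\mathbb{N}$, the linear interpolation $L_S(h):\mathbb{R}_{\ge0}\to\mathbb{R}_{\ge0}$ is the polygonal chain starting at $(0,0)$ and passing through the points $(n,h(n))$, $n\in S$, in increasing order of $n$. $L_{\mathbb{N}_+}(n\mapsto\sum_{k=1}^n f(k))$ is strictly increasing and unbounded, hence invertible on $\mathbb{R}_{\ge0}$. *)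

(* Defs.v *)
From Stdlib Require Import Reals Lra Lia Arith ClassicalEpsilon.
Open Scope R_scope.

Fixpoint psum (f : nat -> nat) (n : nat) : nat :=
  match n with
  | O => O
  | S m => (psum f m + f (S m))%nat
  end.

(* A is "the sequence n occurs f(n) times" A_f, characterized by its
   defining equations (for all n >= 1, 0 <= m < f(n+1):
   A(m + sum_{k<=n} f k) = n, and A(m) = 0 for 0 <= m < f(1)). *)
Definition is_occurs_seq (f : nat -> nat) (A : nat -> nat) : Prop :=
  (forall n m : nat, (1 <= n)%nat -> (m < f (n + 1))%nat ->
       A (m + psum f n)%nat = n) /\
  (forall m : nat, (m < f 1)%nat -> A m = O).

Definition incr_indices (A : nat -> nat) (n : nat) : Prop :=
  (0 < n)%nat /\ (A (n - 1) < A n)%nat.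

(* value at a node of the polygonal chain: (0,0) is the starting point *)
Definition node_val (h : nat -> nat) (a : nat) : R :=
  if Nat.eqb a 0 then 0 else INR (h a).

(* v is the value at x of the polygonal chain starting at (0,0) and passing
   through the points (n, h n), n in S, in increasing order of n:
   x lies between two consecutive nodes a < b of {0} u S, and v is given by
   the linear interpolation on that segment. *)
Definition interp_at (S : nat -> Prop) (h : nat -> nat) (x v : R) : Prop :=
  exists a b : nat,
    (a = O \/ S a) /\ S b /\ (a < b)%nat /\
    (forall c : nat, (a < c < b)%nat -> ~ S c) /\
    INR a <= x <= INR b /\
    v = node_val h a + (x - INR a) / (INR b - INR a) * (node_val h b - node_val h a).

(* L_S(h) as a function on R (meaningful on R_{>=0}, S infinite subset of N_+) *)
Definition lin_interp (S : nat -> Prop) (h : nat -> nat) (x : R) : R :=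
  epsilon (inhabits 0) (fun v => interp_at S h x v).

Definition inv_fun (g : R -> R) (x : R) : R :=
  epsilon (inhabits 0) (fun y => 0 <= y /\ g y = x).

Definition posnat (n : nat) : Prop := (0 < n)%nat.

(* Main.v *)
Require Import Defs.
From Stdlib Require Import Reals.
From Stdlib Require Import Lra Lia Arith ClassicalEpsilon ZArith.
Open Scope R_scope.

Definition seg (t u : nat -> nat) (k : nat) (x : R) : R :=
  INR (u k) + (x - INR (t k)) / (INR (t (S k)) - INR (t k)) * (INR (u (S k)) - INR (u k)).

Definition setup (P : nat -> Prop) (h t u : nat -> nat) : Prop :=
  t O = O /\ (forall k, (t k < t (S k))%nat) /\
  (forall n, P n <-> exists k, (1 <= k)%nat /\ t k = n) /\
  (forall k, node_val h (t k) = INR (u k)).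

Lemma locate_gen (t : nat -> nat) : t O = O -> (forall k, (t k < t (S k))%nat) ->
  forall j, exists n, (t n <= j < t (S n))%nat.
Proof.
  intros H0 Hm j.
  induction j.
  - exists O. rewrite H0. specialize (Hm O). lia.
  - destruct IHj as [n Hn].
    destruct (lt_dec (S j) (t (S n))).
    + exists n; lia.
    + exists (S n). specialize (Hm (S n)). lia.
Qed.

Section Gen.
Variables (P : nat -> Prop) (h t u : nat -> nat).
Hypothesis hs : setup P h t u.

Lemma mono : forall i j, (i < j)%nat -> (t i < t j)%nat.
Proof.
  destruct hs as [_ [Hm _]].
  intros i j Hij; induction Hij.
  - apply Hm.
  - specialize (Hm m); lia.
Qed.

Lemma mono_le : forall i j, (i <= j)%nat -> (t i <= t j)%nat.
Proof.
  intros i j Hij. destruct (Nat.eq_dec i j). subst; lia.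
  assert (i < j)%nat by lia. pose proof (mono i j H); lia.
Qed.

Lemma mono_rev : forall i j, (t i < t j)%nat -> (i < j)%nat.
Proof.
  intros i j H. destruct (lt_dec i j). auto.
  pose proof (mono_le j i ltac:(lia)). lia.
Qed.

Lemma G1 x v : interp_at P h x v ->
  exists k, INR (t k) <= x <= INR (t (S k)) /\ v = seg t u k x.
Proof.
  destruct hs as [H0 [Hm [HP Hn]]].
  intros [a [b [Ha [Hb [Hab [Hnone [Hx Hv]]]]]]].
  assert (exists ka, t ka = a) as [ka Hka].
  { destruct Ha as [Ha|Ha]. exists O; congruence.
    apply HP in Ha. destruct Ha as [k [_ Hk]]; eauto. }
  apply HP in Hb. destruct Hb as [kb [Hkb1 Hkb]].
  subst a b.
  pose proof (mono_rev _ _ Hab) as Hlt.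
  assert (kb = S ka).
  { destruct (Nat.eq_dec kb (S ka)); auto.
    exfalso. apply (Hnone (t (S ka))).
    - split; [apply Hm|]. apply mono; lia.
    - apply HP. exists (S ka); split; auto; lia. }
  subst kb. exists ka. split; auto.
  rewrite Hv, !Hn. reflexivity.
Qed.

Lemma G2 k x : INR (t k) <= x <= INR (t (S k)) -> interp_at P h x (seg t u k x).
Proof.
  destruct hs as [H0 [Hm [HP Hn]]].
  intros Hx. exists (t k), (t (S k)).
  split; [|split; [|split; [|split; [|split]]]].
  - destruct k. left; auto. right; apply HP; exists (S k); split; auto; lia.
  - apply HP; exists (S k); split; auto; lia.
  - apply Hm.
  - intros c Hc HPc. apply HP in HPc. destruct HPc as [j [_ Hj]]; subst c.
    destruct Hc as [Hc1 Hc2]. apply mono_rev in Hc1. apply mono_rev in Hc2. lia.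
  - auto.
  - unfold seg; rewrite !Hn; reflexivity.
Qed.

Lemma pos_gap k : INR (t (S k)) - INR (t k) > 0.
Proof.
  destruct hs as [H0 [Hm _]]. pose proof (lt_INR _ _ (Hm k)). lra.
Qed.

Lemma G3 k k' x : INR (t k) <= x <= INR (t (S k)) ->
  INR (t k') <= x <= INR (t (S k')) -> seg t u k x = seg t u k' x.
Proof.
  assert (Hgen : forall k k', (k < k')%nat -> INR (t k) <= x <= INR (t (S k)) ->
    INR (t k') <= x <= INR (t (S k')) -> seg t u k x = seg t u k' x).
  { clear k k'. intros k k' Hkk H1 H2.
    assert (k' = S k).
    { destruct (Nat.eq_dec k' (S k)); auto.
      pose proof (mono (S k) k' ltac:(lia)) as H. apply lt_INR in H. lra. }
    subst k'.
    assert (x = INR (t (S k))) by lra. subst x.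
    pose proof (pos_gap k). pose proof (pos_gap (S k)).
    unfold seg. field. lra. }
  intros H1 H2. destruct (lt_eq_lt_dec k k') as [[Hl|He]|Hl].
  - apply Hgen; auto.
  - subst; reflexivity.
  - symmetry; apply Hgen; auto.
Qed.

Lemma G4 x : 0 <= x -> exists k, INR (t k) <= x <= INR (t (S k)).
Proof.
  intros Hx.
  destruct (archimed x) as [Hu1 Hu2].
  assert (Hz : (1 <= up x)%Z).
  { assert (0 < up x)%Z by (apply lt_IZR; simpl; lra). lia. }
  set (j := Z.to_nat (up x - 1)).
  assert (Hj : INR j = IZR (up x) - 1).
  { unfold j. rewrite INR_IZR_INZ, Z2Nat.id by lia.
    rewrite minus_IZR. reflexivity. }
  destruct hs as [H0 [Hm _]].
  destruct (locate_gen t H0 Hm j) as [n [Hn1 Hn2]].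
  exists n. apply le_INR in Hn1. apply le_INR in Hn2.
  rewrite S_INR in Hn2. lra.
Qed.

Lemma Lval k x : INR (t k) <= x <= INR (t (S k)) -> lin_interp P h x = seg t u k x.
Proof.
  intros Hx. unfold lin_interp.
  pose proof (epsilon_spec (inhabits 0) (fun v => interp_at P h x v)
    (ex_intro _ _ (G2 k x Hx))) as Hs.
  destruct (G1 _ _ Hs) as [k' [Hk' ->]].
  apply G3; auto.
Qed.

End Gen.

Lemma psum_lt f (hf : forall n : nat, (0 < n)%nat -> (0 < f n)%nat) k :
  (psum f k < psum f (S k))%nat.
Proof. simpl. specialize (hf (S k) ltac:(lia)). lia. Qed.

Lemma setup1 f (hf : forall n : nat, (0 < n)%nat -> (0 < f n)%nat) :
  setup posnat (psum f) (fun n => n) (psum f).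
Proof.
  split; [reflexivity|split; [intros; lia|split]].
  - intros n; unfold posnat; split.
    + intros; exists n; split; auto; lia.
    + intros [k [H1 H2]]; lia.
  - intros k. unfold node_val. destruct k; reflexivity.
Qed.

Lemma setup2 f A (hf : forall n : nat, (0 < n)%nat -> (0 < f n)%nat)
  (hA : is_occurs_seq f A) :
  setup (incr_indices A) A (psum f) (fun n => n).
Proof.
  destruct hA as [hA1 hA2].
  assert (Hval : forall n j, (psum f n <= j < psum f (S n))%nat -> A j = n).
  { intros n j Hj. destruct n.
    - apply hA2. simpl in Hj. lia.
    - specialize (hA1 (S n) (j - psum f (S n))%nat ltac:(lia)).
      rewrite Nat.sub_add in hA1 by lia. apply hA1.
      simpl in Hj |- *. rewrite Nat.add_1_r. simpl. lia. }
  assert (hs0 : psum f 0 = O) by reflexivity.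
  assert (hm : forall k, (psum f k < psum f (S k))%nat) by (apply psum_lt; auto).
  assert (Hpos : forall k, (1 <= k)%nat -> (0 < psum f k)%nat).
  { intros k Hk. destruct k. lia. specialize (hm k). lia. }
  split; [reflexivity|split; [exact hm|split]].
  - intros n; split.
    + intros [Hn Hinc].
      destruct (locate_gen (psum f) hs0 hm n) as [m Hm].
      destruct (Nat.eq_dec (psum f m) n) as [He|Hne].
      * exists m; split; auto. destruct m; [simpl in He; lia|lia].
      * rewrite (Hval m n) in Hinc by lia. rewrite (Hval m (n-1)%nat) in Hinc by lia. lia.
    + intros [k [Hk Hkn]]. subst n. split; [apply Hpos; auto|].
      destruct k; [lia|].
      rewrite (Hval (S k) (psum f (S k))) by (specialize (hm (S k)); lia).
      rewrite (Hval k (psum f (S k) - 1)%nat) by (specialize (hm k); simpl in *; lia). lia.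
  - intros k. unfold node_val. destruct k; [reflexivity|].
    pose proof (Hpos (S k) ltac:(lia)).
    destruct (Nat.eqb_spec (psum f (S k)) 0); [lia|].
    rewrite (Hval (S k) (psum f (S k))) by (specialize (hm (S k)); lia). reflexivity.
Qed.

Theorem lemma2 (f : nat -> nat) (A : nat -> nat)
  (hf : forall n : nat, (0 < n)%nat -> (0 < f n)%nat)
  (hA : is_occurs_seq f A) :
  forall x : R, 0 <= x ->
    lin_interp (incr_indices A) A x = inv_fun (lin_interp posnat (psum f)) x.
Proof.
  intros x Hx.
  pose proof (setup1 f hf) as s1.
  pose proof (setup2 f A hf hA) as s2.
  destruct (G4 _ _ _ _ s2 x Hx) as [k Hk].
  pose proof (pos_gap _ _ _ _ s2 k) as Dk.
  set (y := seg (psum f) (fun n => n) k x).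
  assert (Hy : INR k <= y <= INR (S k)).
  { unfold y, seg. cbv beta. rewrite S_INR.
    assert (Hr : 0 <= (x - INR (psum f k)) / (INR (psum f (S k)) - INR (psum f k)) <= 1).
    { split.
      - unfold Rdiv; apply Rmult_le_pos; [lra|left; apply Rinv_0_lt_compat; lra].
      - apply Rmult_le_reg_r with (INR (psum f (S k)) - INR (psum f k)); [lra|].
        unfold Rdiv. rewrite Rmult_assoc, Rinv_l by lra. lra. }
    lra. }
  assert (gy : lin_interp posnat (psum f) y = x).
  { rewrite (Lval _ _ _ _ s1 k y Hy). unfold seg, y, seg. rewrite S_INR. field. lra. }
  unfold inv_fun.
  pose proof (epsilon_spec (inhabits 0)
    (fun y => 0 <= y /\ lin_interp posnat (psum f) y = x)
    (ex_intro _ y (conj (Rle_trans _ _ _ (pos_INR k) (proj1 Hy)) gy))) as Hs.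
  set (y' := epsilon _ _) in *.
  destruct Hs as [Hy'0 Hgy'].
  destruct (G4 _ _ _ _ s1 y' Hy'0) as [j Hj].
  rewrite (Lval _ _ _ _ s1 j y' Hj) in Hgy'.
  pose proof (pos_gap _ _ _ _ s2 j) as Dj.
  unfold seg in Hgy'. cbv beta in Hj, Hgy'.
  rewrite S_INR in Hgy', Hj.
  assert (Hxe : x = INR (psum f j) + (y' - INR j) * (INR (psum f (S j)) - INR (psum f j))).
  { rewrite <- Hgy'. field. lra. }
  assert (Hxj : INR (psum f j) <= x <= INR (psum f (S j))) by nra.
  rewrite (Lval _ _ _ _ s2 j x Hxj). unfold seg. rewrite S_INR, Hxe. field. lra.
Qed.
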